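(* Let $-1<g<1$ and $x,y\in[-1,1]$. Let $L_\ell$ denote the $\ell$-th Legendre polynomial and define $$H(x,y;g)=\sum_{\ell=0}^\infty \frac{2\ell+1}{2}\,g^\ell L_\ell(x)L_\ell(y).$$ Set $$w_\pm = 1+g^2-2g\left(xy \mp \sqrt{1-x^2}\sqrt{1-y^2}\right).$$ Then $w_+>0$, $w_->0$, and $$H(x,y;g)=\frac{1-g^2}{\pi\, w_-\sqrt{w_+}}\;E_0\!\left(\frac{4g\sqrt{1-x^2}\sqrt{1-y^2}}{w_+}\right),$$ where $E_0$ is the complete elliptic integral of the second kind (in the convention below). Equivalently, writing $x=\cos\theta$, $y=\cos\mu$ with $\theta,\mu\in[0,\pi]$ and $u_\pm=1+g^2-2g\cos(\theta\pm\mu)$, $$H(\cos\theta,\cos\mu;g)=\frac{1-g^2}{\pi\,u_-\sqrt{u_+}}\,E_0\!\left(\frac{u_+-u_-}{u_+}\right).$$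
   Context: Here $E_0$ is defined in terms of the modulus $m$ (not the parameter $k$ with $m=k^2$): $$E_0(m)=\int_0^{\pi/2}\sqrt{1-m\sin^2 s}\,ds \qquad (m<1).$$ The arguments appearing in the formulas are real and less than $1$. The series defining $H$ is the Henyey–Greenstein scattering kernel $P_0$, i.e. the azimuthal average of the Henyey–Greenstein phase function $$p_{HG}(t,g)=\tfrac12(1-g^2)(1+g^2-2gt)^{-3/2}.$$ *)

(* Defs.v *)
From Stdlib Require Import Reals.
From Coquelicot Require Import Coquelicot.
Open Scope R_scope.

(* Legendre polynomials via Bonnet's recurrence:
   L_0 = 1, L_1 = x, (n+2) L_{n+2} = (2n+3) x L_{n+1} - (n+1) L_n. *)
Fixpoint legendre_pair (n : nat) (x : R) : R * R :=
  match n with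
  | O => (1, x)
  | S k => let (a, b) := legendre_pair k x in
           (b, ((2 * INR k + 3) * x * b - (INR k + 1) * a) / (INR k + 2))
  end.

Definition legendre (n : nat) (x : R) : R := fst (legendre_pair n x).

Definition E0 (m : R) : R :=
  RInt (fun s => sqrt (1 - m * sin s ^ 2)) 0 (PI / 2).

Definition H_term (g x y : R) (l : nat) : R :=
  (2 * INR l + 1) / 2 * g ^ l * legendre l x * legendre l y.

(* Main.v *)
Require Import Defs.
From Stdlib Require Import Reals Lra Lia.
From Coquelicot Require Import Coquelicot.
Open Scope R_scope.

Lemma leg_snd n x : snd (legendre_pair n x) = legendre (S n) x.
Proof. unfold legendre; simpl. destruct (legendre_pair n x); reflexivity. Qed.

Lemma leg0 x : legendre 0 x = 1.
Proof. reflexivity. Qed.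
Lemma leg1 x : legendre 1 x = x.
Proof. reflexivity. Qed.

Lemma leg_rec n x : legendre (S (S n)) x =
  ((2 * INR n + 3) * x * legendre (S n) x - (INR n + 1) * legendre n x) / (INR n + 2).
Proof.
  unfold legendre at 1; simpl. rewrite <- (leg_snd n x).
  unfold legendre; simpl. destruct (legendre_pair n x); reflexivity.
Qed.

Lemma INR_p2 n : INR n + 2 <> 0.
Proof. pose proof (pos_INR n); lra. Qed.

Lemma leg_bonnet n x : (INR n + 2) * legendre (S (S n)) x =
  (2 * INR n + 3) * x * legendre (S n) x - (INR n + 1) * legendre n x.
Proof. rewrite leg_rec. field. apply INR_p2. Qed.

Fixpoint dleg (n : nat) (x : R) : R :=
  match n with O => 0 | S k => (INR k + 1) * legendre k x + x * dleg k x end.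
Fixpoint d2leg (n : nat) (x : R) : R :=
  match n with O => 0 | S k => (INR k + 2) * dleg k x + x * d2leg k x end.

Lemma leg_I3 n x : x * dleg (S n) x - dleg n x = (INR n + 1) * legendre (S n) x.
Proof.
  induction n.
  - simpl. unfold legendre; simpl. ring.
  - assert (HD2 : dleg (S (S n)) x = (INR (S n) + 1) * legendre (S n) x + x * dleg (S n) x) by reflexivity.
    assert (HD1 : dleg (S n) x = (INR n + 1) * legendre n x + x * dleg n x) by reflexivity.
    rewrite HD2. rewrite S_INR.
    pose proof (leg_bonnet n x) as Hb.
    pose proof (f_equal (Rmult x) IHn) as IHx.
    set (D1 := dleg (S n) x) in *. set (D0 := dleg n x) in *.
    pose proof (f_equal (Rmult x) HD1) as HD1x.
    nra.
Qed.

Lemma leg_I2 n x : (1 - x^2) * dleg n x = (INR n + 1) * (x * legendre n x - legendre (S n) x).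
Proof.
  induction n.
  - simpl. unfold legendre; simpl. ring.
  - change (dleg (S n) x) with ((INR n + 1) * legendre n x + x * dleg n x).
    rewrite S_INR.
    pose proof (leg_bonnet n x) as Hb.
    pose proof (f_equal (Rmult x) IHn) as IHx.
    nra.
Qed.

Lemma leg_ode n x : (1 - x^2) * d2leg n x - 2 * x * dleg n x
   + INR n * (INR n + 1) * legendre n x = 0.
Proof.
  induction n.
  - simpl. ring.
  - change (d2leg (S n) x) with ((INR n + 2) * dleg n x + x * d2leg n x).
    change (dleg (S n) x) with ((INR n + 1) * legendre n x + x * dleg n x).
    rewrite S_INR. pose proof (leg_I2 n x) as H2.
    pose proof (f_equal (Rmult x) IHn) as IHx.
    pose proof (f_equal (Rmult (INR n + 2)) H2) as H2'.
    nra.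
Qed.

Lemma leg_deriv2 n x : is_derive (legendre n) x (dleg n x) /\ is_derive (legendre (S n)) x (dleg (S n) x).
Proof.
  revert x. induction n; intro x.
  - split.
    + apply is_derive_ext with (fun _ => 1). intro; reflexivity.
      simpl. auto_derive; auto.
    + apply is_derive_ext with (fun y => y). intro; reflexivity.
      simpl. auto_derive; [auto| unfold legendre; simpl; ring].
  - split; [apply IHn|].
    apply is_derive_ext with
      (fun y => ((2 * INR n + 3) * y * legendre (S n) y - (INR n + 1) * legendre n y) / (INR n + 2)).
    { intro; symmetry; apply leg_rec. }
    assert (H1 := fun y => proj1 (IHn y)). assert (H2 := fun y => proj2 (IHn y)).
    auto_derive.
    + repeat split; try (eexists; apply H1); try (eexists; apply H2).
    + replace (Derive (fun y : R => legendre n y) x) with (dleg n x) by (symmetry; apply is_derive_unique; apply H1).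
      replace (Derive (fun y : R => legendre (S n) y) x) with (dleg (S n) x) by (symmetry; apply is_derive_unique; apply H2).
      pose proof (leg_I3 n x) as I3.
      assert (E : dleg n x = x * dleg (S n) x - (INR n + 1) * legendre (S n) x) by lra.
      rewrite E.
      change (dleg (S (S n)) x) with ((INR (S n) + 1) * legendre (S n) x + x * dleg (S n) x).
      rewrite S_INR. field. apply INR_p2.
Qed.

Lemma leg_deriv n x : is_derive (legendre n) x (dleg n x).
Proof. apply leg_deriv2. Qed.

Lemma dleg_deriv n x : is_derive (dleg n) x (d2leg n x).
Proof.
  revert x; induction n; intro x.
  - simpl. auto_derive; auto.
  - apply is_derive_ext with (fun y => (INR n + 1) * legendre n y + y * dleg n y).
    { intro; reflexivity. }
    assert (H1 := leg_deriv n). 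
    auto_derive.
    + repeat split; try (eexists; apply H1); try (eexists; apply IHn).
    + replace (Derive (fun y : R => legendre n y) x) with (dleg n x) by (symmetry; apply is_derive_unique; apply H1).
      replace (Derive (fun y : R => dleg n y) x) with (d2leg n x) by (symmetry; apply is_derive_unique; apply IHn).
      simpl. ring.
Qed.

Lemma leg_one n : legendre n 1 = 1.
Proof.
  assert (H : forall n, legendre n 1 = 1 /\ legendre (S n) 1 = 1).
  { induction n0. split; reflexivity.
    split; [apply IHn0|]. rewrite leg_rec. destruct IHn0 as [-> ->]. field. apply INR_p2. }
  apply H.
Qed.

Lemma leg_neg n x : legendre n (- x) = (-1) ^ n * legendre n x.
Proof.
  assert (H : forall n, legendre n (-x) = (-1)^n * legendre n x /\
                        legendre (S n) (-x) = (-1)^(S n) * legendre (S n) x).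
  { induction n0. split; simpl; unfold legendre; simpl; ring.
    split; [apply IHn0|]. rewrite !leg_rec. destruct IHn0 as [-> ->]. simpl. field. apply INR_p2. }
  apply H.
Qed.

Lemma leg_cont n x : continuous (legendre n) x.
Proof. apply (ex_derive_continuous (V := R_NormedModule) (legendre n)). eexists. apply leg_deriv. Qed.
Lemma dleg_cont n x : continuous (dleg n) x.
Proof. apply (ex_derive_continuous (V := R_NormedModule) (dleg n)). eexists. apply dleg_deriv. Qed.

Lemma energy_deriv (p d dd : R -> R) lam u : lam <> 0 ->
  (forall x, is_derive p x (d x)) -> (forall x, is_derive d x (dd x)) ->
  is_derive (fun t => p t ^ 2 + (1 - t ^ 2) * d t ^ 2 / lam) u
    (2 * p u * d u + (- 2 * u * d u ^ 2 + (1 - u^2) * 2 * d u * dd u) / lam).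
Proof.
  intros Hl H1 H2. auto_derive.
  - repeat split; try (eexists; apply H1); try (eexists; apply H2).
  - replace (Derive (fun y : R => p y) u) with (d u) by (symmetry; apply is_derive_unique; apply H1).
    replace (Derive (fun y : R => d y) u) with (dd u) by (symmetry; apply is_derive_unique; apply H2).
    field. auto.
Qed.

Lemma leg_sq_le_pos n t : 0 <= t <= 1 -> legendre n t ^ 2 <= 1.
Proof.
  intros Ht. destruct n as [|n].
  { unfold legendre; simpl. lra. }
  set (lam := (INR (S n) * (INR (S n) + 1))).
  assert (Hlam : 0 < lam).
  { unfold lam. rewrite S_INR. pose proof (pos_INR n). nra. }
  set (G := fun t => legendre (S n) t ^ 2 + (1 - t ^ 2) * dleg (S n) t ^ 2 / lam).
  assert (HG : forall u, is_derive G u (2 * u * dleg (S n) u ^ 2 / lam)).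
  { intro u. unfold G.
    assert (H1 := leg_deriv (S n)). assert (H2 := dleg_deriv (S n)).
    assert (Hd := energy_deriv (legendre (S n)) (dleg (S n)) (d2leg (S n)) lam u ltac:(lra) H1 H2).
    pose proof (leg_ode (S n) u) as Ho. fold lam in Ho.
    assert (E : (1 - u^2) * d2leg (S n) u = 2 * u * dleg (S n) u - lam * legendre (S n) u) by lra.
    replace (2 * u * dleg (S n) u ^ 2 / lam) with
      (2 * legendre (S n) u * dleg (S n) u + (- 2 * u * dleg (S n) u ^ 2 + (1 - u^2) * 2 * dleg (S n) u * d2leg (S n) u) / lam); [exact Hd|].
    replace ((1 - u^2) * 2 * dleg (S n) u * d2leg (S n) u) with (2 * dleg (S n) u * (2 * u * dleg (S n) u - lam * legendre (S n) u)) by (rewrite <- E; ring).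
    field. lra. }
  destruct (MVT_gen G t 1 (fun u => 2 * u * dleg (S n) u ^ 2 / lam)) as [c [Hc Heq]].
  - intros; apply HG.
  - intros. apply continuity_pt_filterlim. apply (ex_derive_continuous (V := R_NormedModule) G). eexists; apply HG.
  - rewrite Rmin_left in Hc by lra. rewrite Rmax_right in Hc by lra.
    assert (G1 : G 1 = 1). { unfold G. rewrite leg_one. field. lra. }
    assert (0 <= 2 * c * dleg (S n) c ^ 2 / lam * (1 - t)).
    { apply Rmult_le_pos; [|lra]. unfold Rdiv. apply Rmult_le_pos; [|left; apply Rinv_0_lt_compat; lra].
      apply Rmult_le_pos; [lra| apply pow2_ge_0]. }
    assert (0 <= (1 - t ^ 2) * dleg (S n) t ^ 2 / lam).
    { unfold Rdiv. apply Rmult_le_pos; [|left; apply Rinv_0_lt_compat; lra].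
      apply Rmult_le_pos; [nra| apply pow2_ge_0]. }
    unfold G in Heq, G1. lra.
Qed.

Lemma leg_bound n t : -1 <= t <= 1 -> Rabs (legendre n t) <= 1.
Proof.
  intros Ht. assert (legendre n t ^ 2 <= 1).
  { destruct (Rle_dec 0 t).
    - apply leg_sq_le_pos; lra.
    - replace t with (- (- t)) by ring. rewrite leg_neg.
      rewrite Rpow_mult_distr. rewrite <- pow_mult.
      replace ((-1) ^ (n * 2)) with 1.
      + rewrite Rmult_1_l. apply leg_sq_le_pos; lra.
      + rewrite Nat.mul_comm, pow_mult. replace ((-1)^2) with 1 by ring. rewrite pow1. reflexivity. }
  apply Rabs_le. nra.
Qed.

Lemma series_lim (a : nat -> R) (l : R) : is_series a l -> is_lim_seq (fun N => sum_f_R0 a N) l.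
Proof. intro H. apply is_lim_seq_ext with (sum_n a). intro; apply sum_n_Reals. exact H. Qed.

Lemma lim_series (a : nat -> R) (l : R) : is_lim_seq (fun N => sum_f_R0 a N) l -> is_series a l.
Proof. intro H. assert (H' : is_lim_seq (sum_n a) l).
  { apply is_lim_seq_ext with (fun N => sum_f_R0 a N). intro; symmetry; apply sum_n_Reals. exact H. }
  exact H'. Qed.

Lemma radius_bounded (a : nat -> R) g : (forall n, Rabs (a n) <= 1) -> Rabs g < 1 ->
  Rbar_lt (Rabs g) (CV_radius a).
Proof.
  intros Ha Hg. set (r := (1 + Rabs g) / 2).
  assert (Hr0 : 0 <= r) by (unfold r; pose proof (Rabs_pos g); lra).
  assert (Hr1 : r < 1) by (unfold r; lra).
  assert (Hd : CV_disk a r).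
  { unfold CV_disk. apply (ex_series_le (K := R_AbsRing) (V := R_CompleteNormedModule)) with (fun n => r ^ n).
    - intro n. rewrite <- (Rabs_pos_eq (r^n)) at 2 by (apply pow_le; lra).
      unfold norm; simpl. rewrite Rabs_Rabsolu, Rabs_mult.
      pose proof (Rabs_pos (r^n)). specialize (Ha n). nra.
    - apply ex_series_geom. rewrite Rabs_pos_eq; lra. }
  destruct (Lub_Rbar_correct (CV_disk a)) as [Hub _].
  specialize (Hub r Hd). fold (CV_radius a) in Hub.
  eapply Rbar_lt_le_trans; [|exact Hub]. simpl. unfold r; lra.
Qed.

Lemma ex_series_n_geom g : Rabs g < 1 -> ex_series (fun n => INR (S n) * Rabs g ^ n).
Proof.
  intros Hg.
  assert (HR : CV_radius (fun _ : nat => 1) = 1).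
  { replace (Finite 1) with (Finite (/1)) by (f_equal; field).
    apply CV_radius_finite_DAlembert; [intros; lra|lra|].
    apply is_lim_seq_ext with (fun _ => 1). intros; rewrite Rdiv_1_r, Rabs_R1; reflexivity.
    apply is_lim_seq_const. }
  assert (Hin : Rbar_lt (Rabs (Rabs g)) (CV_radius (PS_derive (fun _ : nat => 1)))).
  { rewrite CV_radius_derive, HR. simpl. rewrite Rabs_Rabsolu. exact Hg. }
  apply CV_disk_inside in Hin.
  eapply ex_series_ext; [|exact Hin].
  intro n. unfold PS_derive. rewrite Rmult_1_r. rewrite Rabs_pos_eq; [reflexivity|].
  apply Rmult_le_pos; [apply pos_INR| apply pow_le, Rabs_pos].
Qed.

Lemma lim_n_geom g : Rabs g < 1 -> is_lim_seq (fun n => INR (S n) * Rabs g ^ n) 0.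
Proof. intros; apply ex_series_lim_0, ex_series_n_geom; auto. Qed.

Lemma gf_finite g t N :
  (1 - 2 * g * t + g ^ 2) * sum_f_R0 (fun l => INR l * legendre l t * g ^ l) N =
  g * (t - g) * sum_f_R0 (fun l => legendre l t * g ^ l) N
  - INR (S N) * legendre (S N) t * g ^ (S N) + INR (S N) * legendre N t * g ^ (S (S N)).
Proof.
  induction N.
  - simpl. unfold legendre; simpl. ring.
  - replace (sum_f_R0 (fun l => INR l * legendre l t * g ^ l) (S N)) with
      (sum_f_R0 (fun l => INR l * legendre l t * g ^ l) N + INR (S N) * legendre (S N) t * g ^ (S N)) by reflexivity.
    replace (sum_f_R0 (fun l => legendre l t * g ^ l) (S N)) with
      (sum_f_R0 (fun l => legendre l t * g ^ l) N + legendre (S N) t * g ^ (S N)) by reflexivity.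
    rewrite Rmult_plus_distr_l, IHN. rewrite leg_rec. rewrite !S_INR. simpl.
    field. apply INR_p2.
Qed.

Lemma w2_pos x t : Rabs x < 1 -> -1 <= t <= 1 -> 0 < 1 - 2 * x * t + x ^ 2.
Proof.
  intros Hx Ht. assert (x * t <= Rabs x).
  { apply Rle_trans with (Rabs (x * t)); [apply Rle_abs|]. rewrite Rabs_mult.
    assert (Rabs t <= 1) by (apply Rabs_le; lra). pose proof (Rabs_pos x). nra. }
  assert (x ^ 2 = Rabs x ^ 2) by (rewrite RPow_abs; symmetry; apply Rabs_pos_eq, pow2_ge_0).
  nra.
Qed.

Section GF.
Variable t : R.
Hypothesis Ht : -1 <= t <= 1.
Let a := fun l => legendre l t.

Lemma a_bound n : Rabs (a n) <= 1.
Proof. apply leg_bound; auto. Qed.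

Lemma rad x : Rabs x < 1 -> Rbar_lt (Rabs x) (CV_radius a).
Proof. intros; apply radius_bounded; auto; apply a_bound. Qed.

Lemma serS x : Rabs x < 1 -> is_series (fun l => a l * x ^ l) (PSeries a x).
Proof.
  intros Hx. apply Series_correct. apply ex_series_Rabs. apply CV_disk_inside. apply rad; auto.
Qed.

Lemma serQ x : Rabs x < 1 -> is_series (fun l => INR l * a l * x ^ l) (x * PSeries (PS_derive a) x).
Proof.
  intros Hx.
  assert (H1 : is_series (fun k => PS_derive a k * x ^ k) (PSeries (PS_derive a) x)).
  { apply Series_correct. apply ex_series_Rabs. apply CV_disk_inside.
    rewrite CV_radius_derive. apply rad; auto. }
  apply (is_series_scal x) in H1.
  apply is_series_decr_1.
  assert (E : plus (x * PSeries (PS_derive a) x) (opp (INR 0 * a 0%nat * x ^ 0))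
     = scal x (PSeries (PS_derive a) x)).
  { change (scal x (PSeries (PS_derive a) x)) with (x * PSeries (PS_derive a) x).
    unfold plus, opp; simpl. ring. }
  match goal with |- is_series _ ?v => replace v with (scal x (PSeries (PS_derive a) x)) end.
  eapply is_series_ext; [|exact H1].
  - intro n. unfold PS_derive. change (scal x (INR (S n) * a (S n) * x ^ n)) with (x * (INR (S n) * a (S n) * x ^ n)). simpl. ring.
Qed.

Lemma gf_ode x : Rabs x < 1 ->
  (1 - 2 * x * t + x ^ 2) * (x * PSeries (PS_derive a) x) = x * (t - x) * PSeries a x.
Proof.
  intros Hx.
  pose proof (series_lim _ _ (serS x Hx)) as HS. pose proof (series_lim _ _ (serQ x Hx)) as HQ.
  assert (Hr : is_lim_seq (fun N => - INR (S N) * a (S N) * x ^ (S N) + INR (S N) * a N * x ^ (S (S N))) 0).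
  { apply is_lim_seq_abs_0.
    apply is_lim_seq_le_le with (fun _ => 0) (fun N => 2 * (INR (S N) * Rabs x ^ N)).
    - intro N. split; [apply Rabs_pos|].
      eapply Rle_trans; [apply Rabs_triang|].
      set (K := INR (S N)). assert (HK : 0 <= K) by apply pos_INR.
      rewrite !Rabs_mult, Rabs_Ropp, <- !RPow_abs. rewrite (Rabs_pos_eq K) by auto.
      set (r := Rabs x).
      pose proof (a_bound N). pose proof (a_bound (S N)).
      pose proof (Rabs_pos (a N)). pose proof (Rabs_pos (a (S N))).
      assert (0 <= r ^ N) by (apply pow_le, Rabs_pos).
      assert (0 <= r) by apply Rabs_pos. assert (r < 1) by auto.
      change (r ^ S N) with (r * r ^ N). change (r ^ S (S N)) with (r * (r * r ^ N)).
      assert (r * r ^ N <= r ^ N) by nra.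
      assert (r * (r * r ^ N) <= r ^ N) by nra.
      assert (A1 : Rabs (a (S N)) * (r * r ^ N) <= r ^ N) by nra.
      assert (A2 : Rabs (a N) * (r * (r * r ^ N)) <= r ^ N) by nra.
      nra.
    - apply is_lim_seq_const.
    - replace (Finite 0) with (Rbar_mult 2 0) by (simpl; f_equal; ring).
      apply is_lim_seq_scal_l. apply lim_n_geom; auto. }
  assert (H1 := is_lim_seq_scal_l _ (1 - 2 * x * t + x ^ 2) _ HQ).
  assert (H2 := is_lim_seq_plus' _ _ _ _ (is_lim_seq_scal_l _ (x * (t - x)) _ HS) Hr).
  assert (H3 : is_lim_seq (fun N => (1 - 2 * x * t + x ^ 2) * sum_f_R0 (fun l => INR l * a l * x ^ l) N)
     (x * (t - x) * PSeries a x + 0)).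
  { eapply is_lim_seq_ext; [|exact H2]. intro N.
    unfold a. rewrite (gf_finite x t N). simpl. ring. }
  apply is_lim_seq_unique in H1. apply is_lim_seq_unique in H3.
  rewrite H1 in H3. simpl in H3. injection H3. intro E. simpl. rewrite E. ring.
Qed.

Lemma gf_ode' x : Rabs x < 1 ->
  (1 - 2 * x * t + x ^ 2) * PSeries (PS_derive a) x = (t - x) * PSeries a x.
Proof.
  intros Hx. destruct (Req_dec x 0) as [->|Hx0].
  - rewrite !PSeries_0. unfold PS_derive, a. simpl. unfold legendre; simpl. ring.
  - apply Rmult_eq_reg_l with x; auto. rewrite <- Rmult_assoc, (Rmult_comm x), Rmult_assoc, gf_ode; auto. ring.
Qed.

Lemma K_deriv x : Rabs x < 1 ->
  is_derive (fun y => PSeries a y * sqrt (1 - 2 * y * t + y ^ 2)) x 0.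
Proof.
  intros Hx. pose proof (w2_pos x t Hx Ht) as Hw.
  assert (Hs : is_derive (fun y => sqrt (1 - 2 * y * t + y ^ 2)) x
     ((- 2 * t + 2 * x) / (2 * sqrt (1 - 2 * x * t + x ^ 2)))).
  { auto_derive; [nra|]. replace (1 + - (2*x*t) + x*(x*1)) with (1 - 2*x*t + x^2) by ring. field. apply Rgt_not_eq, sqrt_lt_R0; lra. }
  pose proof (is_derive_PSeries a x (rad x Hx)) as HP.
  pose proof (is_derive_mult _ _ _ _ _ HP Hs ltac:(intros; apply Rmult_comm)) as HM.
  eapply is_derive_ext; [|eapply (is_derive_ext _ _ _ _ (fun y => eq_refl))]. intro; reflexivity.
  replace (0:R) with (plus (mult (PSeries (PS_derive a) x) (sqrt (1 - 2 * x * t + x ^ 2)))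
      (mult (PSeries a x) ((- 2 * t + 2 * x) / (2 * sqrt (1 - 2 * x * t + x ^ 2))))).
  exact HM.
  unfold plus, mult; simpl.
  replace (x * (x * 1)) with (x ^ 2) by ring.
  pose proof (gf_ode' x Hx) as E.
  assert (Hsq : sqrt (1 - 2 * x * t + x ^ 2) * sqrt (1 - 2 * x * t + x ^ 2) = 1 - 2 * x * t + x ^ 2)
    by (apply sqrt_sqrt; lra).
  assert (Hsp : 0 < sqrt (1 - 2 * x * t + x ^ 2)) by (apply sqrt_lt_R0; lra).
  set (s := sqrt (1 - 2 * x * t + x ^ 2)) in *.
  apply Rmult_eq_reg_l with (2 * s); [|lra]. rewrite Rmult_0_r.
  replace (2 * s * (PSeries (PS_derive a) x * s + PSeries a x * ((-2 * t + 2 * x) / (2 * s))))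
    with (2 * (PSeries (PS_derive a) x * (s * s)) + PSeries a x * (-2 * t + 2 * x)) by (field; lra).
  rewrite Hsq. lra.
Qed.

Lemma gf_closed g : Rabs g < 1 -> PSeries a g * sqrt (1 - 2 * g * t + g ^ 2) = 1.
Proof.
  intros Hg.
  set (K := fun y => PSeries a y * sqrt (1 - 2 * y * t + y ^ 2)).
  assert (HK : forall y, Rabs y <= Rabs g -> is_derive K y 0).
  { intros y Hy. apply K_deriv. lra. }
  destruct (MVT_gen K 0 g (fun _ => 0)) as [c [Hc E]].
  - intros y Hy. apply HK. 
    destruct (Rle_dec 0 g).
    + rewrite Rmin_left, Rmax_right in Hy by lra. rewrite !Rabs_pos_eq; lra.
    + rewrite Rmin_right, Rmax_left in Hy by lra. rewrite !Rabs_left; lra.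
  - intros y Hy. apply continuity_pt_filterlim.
    apply (ex_derive_continuous (V := R_NormedModule) K). eexists. apply HK.
    destruct (Rle_dec 0 g).
    + rewrite Rmin_left, Rmax_right in Hy by lra. rewrite (Rabs_pos_eq g) by lra. apply Rabs_le; lra.
    + rewrite Rmin_right, Rmax_left in Hy by lra. rewrite (Rabs_left g) by lra. apply Rabs_le; lra.
  - assert (K0 : K 0 = 1).
    { unfold K. rewrite PSeries_0. unfold a. replace (1 - 2 * 0 * t + 0 ^ 2) with 1 by ring.
      rewrite sqrt_1. unfold legendre; simpl. ring. }
    unfold K in E, K0. lra.
Qed.

Lemma gf_weighted g : Rabs g < 1 ->
  is_series (fun l => (2 * INR l + 1) / 2 * g ^ l * legendre l t)
    ((1 - g ^ 2) / (2 * ((1 - 2 * g * t + g ^ 2) * sqrt (1 - 2 * g * t + g ^ 2)))).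
Proof.
  intros Hg.
  pose proof (w2_pos g t Hg Ht) as Hw.
  assert (Hsp : 0 < sqrt (1 - 2 * g * t + g ^ 2)) by (apply sqrt_lt_R0; lra).
  pose proof (serQ g Hg) as HQ. pose proof (serS g Hg) as HS.
  pose proof (is_series_plus _ _ _ _ HQ (is_series_scal (1/2) _ _ HS)) as H.
  eapply is_series_ext; [|match goal with H : is_series _ ?v |- is_series _ ?w => replace w with v; [exact H|] end].
  - intro n. unfold plus, scal; simpl. unfold mult; simpl. unfold a. field.
  - unfold plus, scal; simpl. unfold mult; simpl.
    pose proof (gf_ode g Hg) as E. pose proof (gf_closed g Hg) as C.
    assert (ES : PSeries a g = / sqrt (1 - 2 * g * t + g ^ 2)).
    { apply Rmult_eq_reg_r with (sqrt (1 - 2 * g * t + g ^ 2)); [|lra]. rewrite C. field. lra. }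
    assert (EQ : g * PSeries (PS_derive a) g = g * (t - g) * PSeries a g / (1 - 2 * g * t + g ^ 2)).
    { apply Rmult_eq_reg_l with (1 - 2 * g * t + g ^ 2); [|lra]. rewrite E. field. lra. }
    rewrite EQ, ES.
    assert (Hsq : sqrt (1 - 2 * g * t + g ^ 2) * sqrt (1 - 2 * g * t + g ^ 2) = 1 - 2 * g * t + g ^ 2)
      by (apply sqrt_sqrt; lra).
    replace (g * (g * 1)) with (g ^ 2) by ring.
    field. split; lra.
Qed.

End GF.

Lemma cont2_1d (f : R -> R -> R) x y : continuity_2d_pt f x y -> continuous (f x) y.
Proof.
  intros H. unfold continuous. apply filterlim_locally. intros eps.
  destruct (H eps) as [d Hd]. exists d. intros v Hv.
  apply Hd. rewrite Rminus_diag, Rabs_R0. apply cond_pos. exact Hv.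
Qed.

Lemma cont_pt (f : R -> R) x : continuous f x -> continuity_pt f x.
Proof. intro H. apply continuity_pt_filterlim. exact H. Qed.

Lemma param_deriv (f df : R -> R -> R) (a b : R) :
  (forall u v, is_derive (fun w => f w v) u (df u v)) ->
  (forall u v, continuity_2d_pt df u v) ->
  (forall u v, continuity_2d_pt f u v) ->
  forall u, is_derive (fun w => RInt (f w) a b) u (RInt (df u) a b).
Proof.
  intros Hd Hc Hf u.
  assert (HD : forall u v, Derive (fun w => f w v) u = df u v).
  { intros; apply is_derive_unique, Hd. }
  replace (RInt (df u) a b) with (RInt (fun t => Derive (fun w => f w t) u) a b).
  2: { apply RInt_ext. intros; apply HD. }
  apply (is_derive_RInt_param f a b u).
  - apply filter_forall. intros x t _. eexists. apply Hd.
  - intros t _. eapply continuity_2d_pt_ext; [|apply (Hc u t)]. intros; symmetry; apply HD.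
  - apply filter_forall. intros x. apply (ex_RInt_continuous (V := R_CompleteNormedModule)). intros z _. apply cont2_1d, Hf.
Qed.

Lemma c2_id1 x y : continuity_2d_pt (fun u _ => u) x y.
Proof. apply continuity_2d_pt_id1. Qed.

Lemma c2_comp1 (f : R -> R) (g : R -> R -> R) x y :
  (forall z, continuous f z) -> continuity_2d_pt g x y -> continuity_2d_pt (fun u v => f (g u v)) x y.
Proof. intros Hf Hg. apply continuity_1d_2d_pt_comp; auto. apply cont_pt, Hf. Qed.

Lemma cos_cont z : continuous cos z.
Proof. apply continuity_pt_filterlim, continuity_cos. Qed.
Lemma sin_cont z : continuous sin z.
Proof. apply continuity_pt_filterlim, continuity_sin. Qed.

Lemma d2leg_cont n z : continuous (d2leg n) z.
Proof.
  induction n; simpl.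
  - apply continuous_const.
  - apply (continuous_plus (fun x => (INR n + 2) * dleg n x) (fun x => x * d2leg n x)).
    + apply (continuous_mult (fun _ => INR n + 2) (dleg n)); [apply continuous_const|apply dleg_cont].
    + apply (continuous_mult (fun x => x) (d2leg n)); [apply continuous_id|auto].
Qed.

Definition cc mu th ph := cos th * cos mu + sin th * sin mu * cos ph.
Definition ct mu th ph := - sin th * cos mu + cos th * sin mu * cos ph.

Section Add.
Variable mu : R.
Variable l : nat.

Lemma c2_cc x y : continuity_2d_pt (cc mu) x y.
Proof.
  unfold cc. apply continuity_2d_pt_plus.
  - apply continuity_2d_pt_mult; [apply c2_comp1; [apply cos_cont|apply continuity_2d_pt_id1]|apply continuity_2d_pt_const].
  - apply continuity_2d_pt_mult; [apply continuity_2d_pt_mult|].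
    + apply c2_comp1; [apply sin_cont|apply continuity_2d_pt_id1].
    + apply continuity_2d_pt_const.
    + apply c2_comp1; [apply cos_cont|apply continuity_2d_pt_id2].
Qed.

Lemma c2_ct x y : continuity_2d_pt (ct mu) x y.
Proof.
  unfold ct. apply continuity_2d_pt_plus.
  - apply continuity_2d_pt_mult; [|apply continuity_2d_pt_const].
    apply continuity_2d_pt_opp. apply c2_comp1; [apply sin_cont|apply continuity_2d_pt_id1].
  - apply continuity_2d_pt_mult; [apply continuity_2d_pt_mult|].
    + apply c2_comp1; [apply cos_cont|apply continuity_2d_pt_id1].
    + apply continuity_2d_pt_const.
    + apply c2_comp1; [apply cos_cont|apply continuity_2d_pt_id2].
Qed.

Lemma d_cc u v : is_derive (fun w => cc mu w v) u (ct mu u v).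
Proof. unfold cc, ct. auto_derive; auto. ring. Qed.
Lemma d_ct u v : is_derive (fun w => ct mu w v) u (- cc mu u v).
Proof. unfold cc, ct. auto_derive; auto. ring. Qed.

Definition f0 u v := legendre l (cc mu u v).
Definition f1 u v := dleg l (cc mu u v) * ct mu u v.
Definition f2 u v := d2leg l (cc mu u v) * ct mu u v * ct mu u v - dleg l (cc mu u v) * cc mu u v.

Lemma d_f0 u v : is_derive (fun w => f0 w v) u (f1 u v).
Proof.
  unfold f0, f1. pose proof (is_derive_comp (legendre l) (fun w => cc mu w v) u _ _ (leg_deriv l _) (d_cc u v)) as H.
  replace (dleg l (cc mu u v) * ct mu u v) with (scal (ct mu u v) (dleg l (cc mu u v))); [exact H|].
  unfold scal; simpl; unfold mult; simpl; ring.
Qed.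

Lemma d_f1 u v : is_derive (fun w => f1 w v) u (f2 u v).
Proof.
  unfold f1, f2. pose proof (is_derive_comp (dleg l) (fun w => cc mu w v) u _ _ (dleg_deriv l _) (d_cc u v)) as H.
  pose proof (is_derive_mult _ _ _ _ _ H (d_ct u v) ltac:(intros; apply Rmult_comm)) as HM.
  replace (d2leg l (cc mu u v) * ct mu u v * ct mu u v - dleg l (cc mu u v) * cc mu u v) with
    (plus (mult (scal (ct mu u v) (d2leg l (cc mu u v))) (ct mu u v)) (mult (dleg l (cc mu u v)) (- cc mu u v))); [exact HM|].
  unfold plus, mult, scal; simpl; unfold mult; simpl; ring.
Qed.

Lemma c2_f0 x y : continuity_2d_pt f0 x y.
Proof. unfold f0. apply c2_comp1; [apply leg_cont|apply c2_cc]. Qed.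
Lemma c2_f1 x y : continuity_2d_pt f1 x y.
Proof. unfold f1. apply continuity_2d_pt_mult; [apply c2_comp1; [apply dleg_cont|apply c2_cc]|apply c2_ct]. Qed.
Lemma c2_f2 x y : continuity_2d_pt f2 x y.
Proof.
  unfold f2. apply continuity_2d_pt_minus.
  - apply continuity_2d_pt_mult; [apply continuity_2d_pt_mult|apply c2_ct].
    + apply c2_comp1; [apply d2leg_cont|apply c2_cc].
    + apply c2_ct.
  - apply continuity_2d_pt_mult; [apply c2_comp1; [apply dleg_cont|apply c2_cc]|apply c2_cc].
Qed.

Definition F u := RInt (f0 u) 0 PI.
Definition F1 u := RInt (f1 u) 0 PI.
Definition F2 u := RInt (f2 u) 0 PI.

Lemma dF u : is_derive F u (F1 u).
Proof. apply (param_deriv f0 f1 0 PI d_f0 c2_f1 c2_f0). Qed.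
Lemma dF1 u : is_derive F1 u (F2 u).
Proof. apply (param_deriv f1 f2 0 PI d_f1 c2_f2 c2_f1). Qed.

Lemma ex_c2 (f : R -> R -> R) u : (forall x y, continuity_2d_pt f x y) -> ex_RInt (f u) 0 PI.
Proof. intros H. apply (ex_RInt_continuous (V := R_CompleteNormedModule)). intros z _. apply cont2_1d, H. Qed.

Lemma trig_Q1 u v : ct mu u v * ct mu u v + cc mu u v * cc mu u v - 1 + sin mu ^ 2 * sin v ^ 2 = 0.
Proof.
  unfold cc, ct.
  pose proof (sin2_cos2 u) as H1. pose proof (sin2_cos2 mu) as H2. pose proof (sin2_cos2 v) as H3.
  unfold Rsqr in *.
  transitivity ((cos mu ^ 2 + sin mu ^ 2 * cos v ^ 2) * (sin u * sin u + cos u * cos u) - 1 + sin mu ^ 2 * sin v ^ 2); [ring|].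
  rewrite H1.
  transitivity (cos mu ^ 2 + sin mu ^ 2 * (sin v * sin v + cos v * cos v) - 1); [ring|].
  rewrite H3. transitivity (sin mu * sin mu + cos mu * cos mu - 1); [ring|]. rewrite H2. ring.
Qed.

Lemma trig_Q2 u v : sin u * cc mu u v + cos u * ct mu u v - sin mu * cos v = 0.
Proof.
  unfold cc, ct. pose proof (sin2_cos2 u) as H1. unfold Rsqr in *.
  transitivity (sin mu * cos v * (sin u * sin u + cos u * cos u - 1)); [ring|]. rewrite H1. ring.
Qed.

Let lam := INR l * (INR l + 1).

Lemma integrand_deriv u v : is_derive (fun w => sin mu * dleg l (cc mu u w) * sin w) v
  (sin u * f2 u v + cos u * f1 u v + lam * sin u * f0 u v).
Proof.
  assert (Hc : is_derive (fun w => cc mu u w) v (- sin u * sin mu * sin v)).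
  { unfold cc. auto_derive; auto. ring. }
  pose proof (is_derive_comp (dleg l) (fun w => cc mu u w) v _ _ (dleg_deriv l _) Hc) as H.
  assert (Hs : is_derive sin v (cos v)) by (auto_derive; auto; ring).
  pose proof (is_derive_mult _ _ _ _ _ H Hs ltac:(intros; apply Rmult_comm)) as HM.
  pose proof (is_derive_scal _ v (sin mu) _ HM) as HM2.
  eapply is_derive_ext; [|match goal with H : is_derive _ _ ?d |- is_derive _ _ ?e => replace e with d; [exact H|] end].
  - intro w. unfold scal, mult; simpl; unfold mult; simpl. ring.
  - unfold scal, mult, plus; simpl; unfold mult, plus; simpl.
    unfold f0, f1, f2. fold lam.
    pose proof (leg_ode l (cc mu u v)) as O. fold lam in O.
    pose proof (trig_Q1 u v) as Q1. pose proof (trig_Q2 u v) as Q2.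
    set (P := legendre l (cc mu u v)) in *. set (D := dleg l (cc mu u v)) in *.
    set (D2 := d2leg l (cc mu u v)) in *. set (c := cc mu u v) in *. set (t := ct mu u v) in *.
    transitivity (sin mu * (D2 * (- sin u * sin mu * sin v) * sin v + D * cos v)
      + sin u * D2 * (t * t + c * c - 1 + sin mu ^ 2 * sin v ^ 2)
      + D * (sin u * c + cos u * t - sin mu * cos v)
      + sin u * ((1 - c ^ 2) * D2 - 2 * c * D + lam * P)).
    + rewrite Q1, Q2, O. ring.
    + ring.
Qed.

Lemma F_ode u : sin u * F2 u + cos u * F1 u + lam * sin u * F u = 0.
Proof.
  assert (H0 : is_RInt (fun v => sin u * f2 u v + cos u * f1 u v + lam * sin u * f0 u v) 0 PI 0).
  { match goal with |- is_RInt ?f _ _ _ => assert (H0' : is_RInt f 0 PI (minus (sin mu * dleg l (cc mu u PI) * sin PI) (sin mu * dleg l (cc mu u 0) * sin 0))) end.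
    2: { replace (minus (sin mu * dleg l (cc mu u PI) * sin PI) (sin mu * dleg l (cc mu u 0) * sin 0)) with 0 in H0'; [exact H0'|].
         rewrite sin_PI, sin_0; unfold minus, plus, opp; simpl; ring. }
    apply (is_RInt_derive (V := R_CompleteNormedModule) (fun w => sin mu * dleg l (cc mu u w) * sin w)).
    - intros; apply integrand_deriv.
    - intros x _. 
      apply (continuous_plus (V := R_NormedModule) (fun v => sin u * f2 u v + cos u * f1 u v) (fun v => lam * sin u * f0 u v)).
      apply (continuous_plus (V := R_NormedModule) (fun v => sin u * f2 u v) (fun v => cos u * f1 u v)).
      + apply (continuous_scal_r (V := R_NormedModule) (sin u) (f2 u)). apply cont2_1d, c2_f2.
      + apply (continuous_scal_r (V := R_NormedModule) (cos u) (f1 u)). apply cont2_1d, c2_f1.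
      + apply (continuous_scal_r (V := R_NormedModule) (lam * sin u) (f0 u)). apply cont2_1d, c2_f0. }
  pose proof (RInt_correct _ _ _ (ex_c2 f2 u c2_f2)) as I2.
  pose proof (RInt_correct _ _ _ (ex_c2 f1 u c2_f1)) as I1.
  pose proof (RInt_correct _ _ _ (ex_c2 f0 u c2_f0)) as I0.
  pose proof (is_RInt_plus _ _ _ _ _ _ (is_RInt_plus _ _ _ _ _ _ (is_RInt_scal _ _ _ (sin u) _ I2) (is_RInt_scal _ _ _ (cos u) _ I1)) (is_RInt_scal _ _ _ (lam * sin u) _ I0)) as HS.
  unfold F, F1, F2.
  apply (is_RInt_unique (V := R_CompleteNormedModule)) in HS. apply (is_RInt_unique (V := R_CompleteNormedModule)) in H0.
  unfold plus, scal in HS; simpl in HS; unfold plus, mult in HS; simpl in HS.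
  rewrite <- HS. exact H0.
Qed.

End Add.

Lemma RInt_Kcos K : RInt (fun v => K * cos v) 0 PI = 0.
Proof.
  apply (is_RInt_unique (V := R_CompleteNormedModule)).
  assert (H : is_RInt (fun v => K * cos v) 0 PI (minus (K * sin PI) (K * sin 0))).
  { apply (is_RInt_derive (V := R_CompleteNormedModule) (fun v => K * sin v)).
    - intros; auto_derive; auto; ring.
    - intros; apply (continuous_scal_r (V := R_NormedModule) K cos). apply cos_cont. }
  replace (minus (K * sin PI) (K * sin 0)) with 0 in H; [exact H|].
  rewrite sin_PI, sin_0; unfold minus, plus, opp; simpl; ring.
Qed.

Lemma RInt_cst K : RInt (fun _ => K) 0 PI = PI * K.
Proof. rewrite RInt_const. unfold scal; simpl; unfold mult; simpl. ring. Qed.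

Section Add2.
Variable mu : R.
Variable l : nat.
Let lam := INR l * (INR l + 1).
Let Pm := legendre l (cos mu).

Definition g0 u := PI * Pm * legendre l (cos u).
Definition g1 u := PI * Pm * (dleg l (cos u) * - sin u).
Definition g2 u := PI * Pm * (d2leg l (cos u) * sin u * sin u - dleg l (cos u) * cos u).

Lemma d_g0 u : is_derive g0 u (g1 u).
Proof.
  unfold g0, g1. pose proof (is_derive_comp (legendre l) cos u _ _ (leg_deriv l _) (is_derive_cos u)) as H.
  apply (is_derive_scal _ u (PI * Pm)) in H.
  eapply is_derive_ext; [|match goal with H : is_derive _ _ ?d |- is_derive _ _ ?e => replace e with d; [exact H|] end].
  - intro; reflexivity.
  - unfold scal; simpl; unfold mult; simpl. ring.
Qed.

Lemma d_g1 u : is_derive g1 u (g2 u).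
Proof.
  unfold g1, g2. pose proof (is_derive_comp (dleg l) cos u _ _ (dleg_deriv l _) (is_derive_cos u)) as H.
  assert (Hs : is_derive (fun x => - sin x) u (- cos u)) by (auto_derive; auto; ring).
  pose proof (is_derive_mult _ _ _ _ _ H Hs ltac:(intros; apply Rmult_comm)) as HM.
  apply (is_derive_scal _ u (PI * Pm)) in HM.
  eapply is_derive_ext; [|match goal with H : is_derive _ _ ?d |- is_derive _ _ ?e => replace e with d; [exact H|] end].
  - intro; reflexivity.
  - unfold scal, mult, plus; simpl; unfold mult, plus; simpl. ring.
Qed.

Lemma g_ode u : sin u * g2 u + cos u * g1 u + lam * sin u * g0 u = 0.
Proof.
  unfold g0, g1, g2. pose proof (leg_ode l (cos u)) as O. fold lam in O.
  pose proof (sin2_cos2 u) as H1. unfold Rsqr in H1.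
  transitivity (PI * Pm * sin u * ((1 - cos u ^ 2) * d2leg l (cos u) - 2 * cos u * dleg l (cos u) + lam * legendre l (cos u))
    + PI * Pm * sin u * d2leg l (cos u) * (sin u * sin u + cos u * cos u - 1)).
  - ring.
  - rewrite O, H1. ring.
Qed.

Definition h u := F mu l u - g0 u.
Definition h1 u := F1 mu l u - g1 u.
Definition h2 u := F2 mu l u - g2 u.

Lemma d_h u : is_derive h u (h1 u).
Proof. apply (is_derive_minus _ _ u _ _ (dF mu l u) (d_g0 u)). Qed.
Lemma d_h1 u : is_derive h1 u (h2 u).
Proof. apply (is_derive_minus _ _ u _ _ (dF1 mu l u) (d_g1 u)). Qed.

Lemma h_ode u : sin u * h2 u + cos u * h1 u + lam * sin u * h u = 0.
Proof.
  unfold h, h1, h2. pose proof (F_ode mu l u) as A. pose proof (g_ode u) as B.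
  fold lam in A. lra.
Qed.

Lemma h_0 : h 0 = 0.
Proof.
  unfold h, F, g0. rewrite (RInt_ext _ (fun _ => legendre l (cos mu))).
  - rewrite RInt_cst, cos_0, leg_one. unfold Pm. ring.
  - intros v _. unfold f0, cc. rewrite cos_0, sin_0. f_equal. ring.
Qed.

Lemma h1_0 : h1 0 = 0.
Proof.
  unfold h1, F1, g1. rewrite (RInt_ext _ (fun v => (dleg l (cos mu) * sin mu) * cos v)).
  - rewrite RInt_Kcos, sin_0. ring.
  - intros v _. unfold f1, cc, ct. rewrite cos_0, sin_0. match goal with |- ?a = ?b => change (@eq R a b) end. replace (1 * cos mu + 0 * sin mu * cos v) with (cos mu) by ring. ring.
Qed.

Lemma h_PI : h PI = 0.
Proof.
  unfold h, F, g0. rewrite (RInt_ext _ (fun _ => legendre l (- cos mu))).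
  - rewrite RInt_cst, cos_PI. replace (-1) with (- (1)) by ring. rewrite !leg_neg, leg_one. unfold Pm. ring.
  - intros v _. unfold f0, cc. rewrite cos_PI, sin_PI. f_equal. ring.
Qed.

Lemma h1_PI : h1 PI = 0.
Proof.
  unfold h1, F1, g1. rewrite (RInt_ext _ (fun v => (- dleg l (- cos mu) * sin mu) * cos v)).
  - rewrite RInt_Kcos, sin_PI. ring.
  - intros v _. unfold f1, cc, ct. rewrite cos_PI, sin_PI.
    match goal with |- ?a = ?b => change (@eq R a b) end. replace (-1 * cos mu + 0 * sin mu * cos v) with (- cos mu) by ring. ring.
Qed.

Hypothesis Hl : (1 <= l)%nat.

Lemma lam_pos : 0 < lam.
Proof. unfold lam. assert (1 <= INR l) by (apply (le_INR 1); auto). nra. Qed.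

Let E u := h u ^ 2 + h1 u ^ 2 / lam.
Let dE u := 2 * h u * h1 u + 2 * h1 u * h2 u / lam.

Lemma d_E u : is_derive E u (dE u).
Proof.
  unfold E, dE. pose proof lam_pos.
  pose proof (d_h u) as A. pose proof (d_h1 u) as B.
  auto_derive.
  - split; [eexists; exact A|split; [eexists; exact B|auto]].
  - replace (Derive (fun x => h x) u) with (h1 u) by (symmetry; apply is_derive_unique; exact A).
    replace (Derive (fun x => h1 x) u) with (h2 u) by (symmetry; apply is_derive_unique; exact B).
    field. lra.
Qed.

Lemma sin_dE u : sin u * dE u = - 2 * cos u * h1 u ^ 2 / lam.
Proof.
  unfold dE. pose proof lam_pos. pose proof (h_ode u).
  assert (H1 : sin u * h2 u = - cos u * h1 u - lam * sin u * h u) by lra.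
  transitivity (2 * h1 u * (sin u * h u) + 2 * h1 u * (sin u * h2 u) / lam); [field; lra|].
  rewrite H1. field. lra.
Qed.

Lemma E_cont x : continuity_pt E x.
Proof. apply cont_pt. apply (ex_derive_continuous (V := R_NormedModule) E). eexists; apply d_E. Qed.

Lemma dE_nonpos x : 0 <= x <= PI / 2 -> dE x <= 0.
Proof.
  intros Hx. pose proof lam_pos. pose proof PI2_1.
  destruct (Req_dec x 0) as [->|Hx0].
  - unfold dE. rewrite h1_0. unfold Rdiv. lra.
  - assert (Hs : 0 < sin x) by (apply sin_gt_0; lra).
    assert (Hc : 0 <= cos x) by (apply cos_ge_0; lra).
    pose proof (sin_dE x) as S.
    assert (- 2 * cos x * h1 x ^ 2 / lam <= 0).
    { assert (0 <= cos x * h1 x ^ 2 / lam).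
      { unfold Rdiv. apply Rmult_le_pos; [apply Rmult_le_pos; [lra|apply pow2_ge_0]|left; apply Rinv_0_lt_compat; lra]. }
      replace (- 2 * cos x * h1 x ^ 2 / lam) with (- 2 * (cos x * h1 x ^ 2 / lam)) by (field; lra). lra. }
    destruct (Rle_dec (dE x) 0); auto. assert (0 < sin x * dE x) by (apply Rmult_lt_0_compat; lra). lra.
Qed.

Lemma dE_nonneg x : PI / 2 <= x <= PI -> 0 <= dE x.
Proof.
  intros Hx. pose proof lam_pos. pose proof PI2_1.
  destruct (Req_dec x PI) as [->|Hx0].
  - unfold dE. rewrite h1_PI. unfold Rdiv. lra.
  - assert (Hs : 0 < sin x) by (apply sin_gt_0; lra).
    assert (Hc : cos x <= 0) by (apply cos_le_0; lra).
    pose proof (sin_dE x) as S.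
    assert (0 <= - 2 * cos x * h1 x ^ 2 / lam).
    { assert (0 <= - cos x * h1 x ^ 2 / lam).
      { unfold Rdiv. apply Rmult_le_pos; [apply Rmult_le_pos; [lra|apply pow2_ge_0]|left; apply Rinv_0_lt_compat; lra]. }
      replace (- 2 * cos x * h1 x ^ 2 / lam) with (2 * (- cos x * h1 x ^ 2 / lam)) by (field; lra). lra. }
    destruct (Rle_dec 0 (dE x)); auto. assert (0 < sin x * - dE x) by (apply Rmult_lt_0_compat; lra). lra.
Qed.

Lemma h_zero x : 0 <= x <= PI -> h x = 0.
Proof.
  intros Hx. pose proof lam_pos. pose proof PI2_1.
  assert (HE : E x <= 0).
  { destruct (Rle_dec x (PI / 2)).
    - destruct (MVT_gen E 0 x dE) as [c [Hc Eq]].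
      + intros; apply d_E.
      + intros; apply E_cont.
      + rewrite Rmin_left, Rmax_right in Hc by lra.
        assert (E 0 = 0) by (unfold E; rewrite h_0, h1_0; field; lra).
        pose proof (dE_nonpos c ltac:(lra)).
        assert (0 <= - dE c * (x - 0)) by (apply Rmult_le_pos; lra). lra.
    - destruct (MVT_gen E x PI dE) as [c [Hc Eq]].
      + intros; apply d_E.
      + intros; apply E_cont.
      + rewrite Rmin_left, Rmax_right in Hc by lra.
        assert (E PI = 0) by (unfold E; rewrite h_PI, h1_PI; field; lra).
        pose proof (dE_nonneg c ltac:(lra)).
        assert (0 <= dE c * (PI - x)) by (apply Rmult_le_pos; lra). lra. }
  unfold E in HE. assert (0 <= h1 x ^ 2 / lam).
  { unfold Rdiv. apply Rmult_le_pos; [apply pow2_ge_0|left; apply Rinv_0_lt_compat; lra]. }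
  assert (h x ^ 2 = 0) by (pose proof (pow2_ge_0 (h x)); lra).
  assert (h x * h x = 0) by (simpl in *; lra). destruct (Rmult_integral _ _ H3); auto.
Qed.

End Add2.

Theorem addition_thm l theta mu : 0 <= theta <= PI ->
  RInt (fun v => legendre l (cos theta * cos mu + sin theta * sin mu * cos v)) 0 PI =
  PI * legendre l (cos theta) * legendre l (cos mu).
Proof.
  intros Ht. destruct l as [|l].
  - rewrite (RInt_ext _ (fun _ => 1)); [rewrite RInt_cst; unfold legendre; simpl; ring|].
    intros; reflexivity.
  - pose proof (h_zero mu (S l) ltac:(lia) theta Ht) as H. unfold h, g0, F in H.
    unfold f0, cc in H. lra.
Qed.

Lemma q_pos m s : m < 1 -> 0 < 1 - m * sin s ^ 2.
Proof.
  intros Hm. pose proof (sin2_cos2 s) as H. unfold Rsqr in H.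
  assert (0 <= sin s ^ 2) by apply pow2_ge_0. assert (sin s ^ 2 <= 1) by (simpl; nra).
  destruct (Rle_dec m 0); nra.
Qed.

Section Ell.
Variable m : R.
Hypothesis Hm : m < 1.
Let q s := 1 - m * sin s ^ 2.

Lemma ell_deriv s : is_derive (fun s => m * (sin s * cos s / sqrt (1 - m * sin s ^ 2))) s
   (sqrt (1 - m * sin s ^ 2) - (1 - m) / ((1 - m * sin s ^ 2) * sqrt (1 - m * sin s ^ 2))).
Proof.
  pose proof (q_pos m s Hm) as Hq.
  assert (Hr : 0 < sqrt (1 - m * sin s ^ 2)) by (apply sqrt_lt_R0; lra).
  assert (Hrr : sqrt (1 - m * sin s ^ 2) * sqrt (1 - m * sin s ^ 2) = 1 - m * sin s ^ 2) by (apply sqrt_sqrt; lra).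
  pose proof (sin2_cos2 s) as Htr. unfold Rsqr in Htr.
  auto_derive.
  - replace (1 + - (m * (sin s * (sin s * 1)))) with (1 - m * sin s ^ 2) by ring. repeat split; auto; lra.
  - replace (1 + - (m * (sin s * (sin s * 1)))) with (1 - m * sin s ^ 2) by ring.
    set (r := sqrt (1 - m * sin s ^ 2)) in *.
    transitivity (m * ((cos s * cos s - sin s * sin s) / r + m * (sin s * sin s) * (cos s * cos s) / (r * r * r))).
    { field. lra. }
    transitivity ((m * (cos s * cos s - sin s * sin s) * (r * r) + m * m * (sin s * sin s) * (cos s * cos s)) / (r * r * r)).
    { field. lra. }
    transitivity (((r * r) * (r * r) - (1 - m)) / (r * r * r)).
    { f_equal. rewrite Hrr. replace (cos s * cos s) with (1 - sin s * sin s) by lra. ring. }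
    rewrite <- Hrr. field. lra.
Qed.

Lemma cont_sq s : continuous (fun s => sqrt (1 - m * sin s ^ 2)) s.
Proof.
  apply (ex_derive_continuous (V := R_NormedModule)). pose proof (q_pos m s Hm).
  auto_derive. replace (1 + - (m * (sin s * (sin s * 1)))) with (1 - m * sin s ^ 2) by ring. repeat split; auto; lra.
Qed.

Lemma cont_isq s : continuous (fun s => 1 / ((1 - m * sin s ^ 2) * sqrt (1 - m * sin s ^ 2))) s.
Proof.
  apply (ex_derive_continuous (V := R_NormedModule)). pose proof (q_pos m s Hm).
  assert (0 < sqrt (1 - m * sin s ^ 2)) by (apply sqrt_lt_R0; lra).
  auto_derive. replace (1 + - (m * (sin s * (sin s * 1)))) with (1 - m * sin s ^ 2) by ring.
  repeat split; auto; try lra. apply Rgt_not_eq, Rmult_lt_0_compat; auto.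
Qed.

Lemma ell_core : RInt (fun s => 1 / ((1 - m * sin s ^ 2) * sqrt (1 - m * sin s ^ 2))) 0 (PI / 2) = E0 m / (1 - m).
Proof.
  assert (H : is_RInt (fun s => sqrt (1 - m * sin s ^ 2) - (1 - m) / ((1 - m * sin s ^ 2) * sqrt (1 - m * sin s ^ 2))) 0 (PI/2)
     (minus (m * (sin (PI/2) * cos (PI/2) / sqrt (1 - m * sin (PI/2) ^ 2))) (m * (sin 0 * cos 0 / sqrt (1 - m * sin 0 ^ 2))))).
  { apply (is_RInt_derive (V := R_CompleteNormedModule) (fun s => m * (sin s * cos s / sqrt (1 - m * sin s ^ 2)))).
    - intros; apply ell_deriv.
    - intros x _. apply (continuous_minus (V := R_NormedModule) (fun s => sqrt (1 - m * sin s ^ 2))).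
      + apply cont_sq.
      + apply (ex_derive_continuous (V := R_NormedModule)). pose proof (q_pos m x Hm).
        assert (0 < sqrt (1 - m * sin x ^ 2)) by (apply sqrt_lt_R0; lra).
        auto_derive. replace (1 + - (m * (sin x * (sin x * 1)))) with (1 - m * sin x ^ 2) by ring.
        repeat split; auto; try lra. apply Rgt_not_eq, Rmult_lt_0_compat; auto. }
  rewrite cos_PI2, sin_0 in H.
  replace (minus (m * (sin (PI / 2) * 0 / sqrt (1 - m * sin (PI / 2) ^ 2))) (m * (0 * cos 0 / sqrt (1 - m * 0 ^ 2)))) with 0 in H
    by (unfold minus, plus, opp; simpl; field; split; apply Rgt_not_eq, sqrt_lt_R0; try (apply q_pos; auto); simpl; lra).
  assert (ex1 : ex_RInt (fun s => sqrt (1 - m * sin s ^ 2)) 0 (PI/2)).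
  { apply (ex_RInt_continuous (V := R_CompleteNormedModule)). intros; apply cont_sq. }
  assert (ex2 : ex_RInt (fun s => 1 / ((1 - m * sin s ^ 2) * sqrt (1 - m * sin s ^ 2))) 0 (PI/2)).
  { apply (ex_RInt_continuous (V := R_CompleteNormedModule)). intros; apply cont_isq. }
  pose proof (is_RInt_minus _ _ _ _ _ _ (RInt_correct _ _ _ ex1) (is_RInt_scal _ _ _ (1 - m) _ (RInt_correct _ _ _ ex2))) as HS.
  apply (is_RInt_unique (V := R_CompleteNormedModule)) in H.
  apply (is_RInt_unique (V := R_CompleteNormedModule)) in HS.
  rewrite (RInt_ext (fun y => minus (sqrt (1 - m * sin y ^ 2)) (scal (1 - m) (1 / ((1 - m * sin y ^ 2) * sqrt (1 - m * sin y ^ 2)))))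
     (fun s => sqrt (1 - m * sin s ^ 2) - (1 - m) / ((1 - m * sin s ^ 2) * sqrt (1 - m * sin s ^ 2)))) in HS.
  2: { intros. unfold minus, plus, opp, scal; simpl; unfold mult, plus, opp; simpl. field.
       pose proof (q_pos m x Hm). split; [apply Rgt_not_eq, sqrt_lt_R0|]; lra. }
  rewrite H in HS.
  assert (Hc : forall a b c : R, minus a (scal c b) = a - c * b) by reflexivity.
  rewrite Hc in HS.
  unfold E0. apply Rmult_eq_reg_l with (1 - m); [|lra]. field_simplify; [|lra]. lra.
Qed.

End Ell.

Lemma ell_full A B : 0 < A - B -> 0 < A + B ->
  RInt (fun v => 1 / ((A - B * cos v) * sqrt (A - B * cos v))) 0 PI
  = 2 / ((A - B) * sqrt (A + B)) * E0 (2 * B / (A + B)).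
Proof.
  intros H1 H2.
  assert (Hp : forall v, 0 < A - B * cos v).
  { intro v. pose proof (COS_bound v). destruct (Rle_dec 0 B); nra. }
  set (f := fun v => 1 / ((A - B * cos v) * sqrt (A - B * cos v))).
  assert (Hc : forall v, continuous f v).
  { intro v. apply (ex_derive_continuous (V := R_NormedModule)). unfold f.
    pose proof (Hp v). assert (0 < sqrt (A - B * cos v)) by (apply sqrt_lt_R0; lra).
    auto_derive. replace (A + - (B * cos v)) with (A - B * cos v) by ring.
    repeat split; auto; try lra. apply Rgt_not_eq, Rmult_lt_0_compat; auto. }
  assert (exf : forall a b, ex_RInt f a b).
  { intros. apply (ex_RInt_continuous (V := R_CompleteNormedModule)). intros; apply Hc. }
  set (m := 2 * B / (A + B)).
  assert (Hm : m < 1) by (unfold m; apply Rmult_lt_reg_r with (A + B); [lra|]; field_simplify; lra).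
  set (k := 1 / ((A + B) * sqrt (A + B))).
  assert (Hsp : 0 < sqrt (A + B)) by (apply sqrt_lt_R0; lra).
  assert (Hf : forall y, scal (-2) (f (-2 * y + PI)) = -2 * (k * (1 / ((1 - m * sin y ^ 2) * sqrt (1 - m * sin y ^ 2))))).
  { intro y. unfold f, k, m. change (scal (-2) ?x) with (-2 * x).
    replace (-2 * y + PI) with (PI - 2 * y) by ring. rewrite Rtrigo_facts.cos_pi_minus, cos_2a_sin.
    replace (A - B * - (1 - 2 * sin y * sin y)) with ((A + B) * (1 - 2 * B / (A + B) * sin y ^ 2)) by (field; lra).
    pose proof (q_pos (2 * B / (A + B)) y Hm).
    rewrite sqrt_mult by lra.
    assert (0 < sqrt (1 - 2 * B / (A + B) * sin y ^ 2)) by (apply sqrt_lt_R0; lra).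
    match goal with |- ?a = ?b => change (@eq R a b) end. field. repeat split; try lra. replace (A + B - 2*B*sin y^2) with ((A+B)*(1 - 2*B/(A+B)*sin y^2)) by (field; lra). apply Rgt_not_eq, Rmult_lt_0_compat; lra. }
  pose proof (RInt_comp_lin (V := R_CompleteNormedModule) f (-2) PI 0 (PI / 2) (exf _ _)) as HL.
  replace (-2 * 0 + PI) with PI in HL by ring. replace (-2 * (PI / 2) + PI) with 0 in HL by field.
  rewrite (RInt_ext _ _ _ _ (fun y _ => Hf y)) in HL.
  rewrite <- (opp_RInt_swap (V := R_CompleteNormedModule) f 0 PI (exf 0 PI)) in HL.
  assert (Hg : ex_RInt (fun y => 1 / ((1 - m * sin y ^ 2) * sqrt (1 - m * sin y ^ 2))) 0 (PI / 2)).
  { apply (ex_RInt_continuous (V := R_CompleteNormedModule)). intros; apply cont_isq; auto. }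
  rewrite (RInt_ext _ (fun y => scal (-2 * k) (1 / ((1 - m * sin y ^ 2) * sqrt (1 - m * sin y ^ 2))))) in HL.
  2: { intros. change (scal (-2 * k) ?x) with (-2 * k * x). match goal with |- ?a = ?b => change (@eq R a b) end. ring. }
  rewrite (RInt_scal (V := R_CompleteNormedModule)) in HL by exact Hg.
  rewrite ell_core in HL by auto.
  change (scal (-2 * k) ?x) with (-2 * k * x) in HL. change (opp ?x) with (- x) in HL.
  assert (Hfin : RInt f 0 PI = 2 * k * (E0 m / (1 - m))) by lra.
  rewrite Hfin. unfold k, m. match goal with |- ?a = ?b => change (@eq R a b) end. field. repeat split; try lra.
Qed.

Section Ser.
Variable g : R.
Hypothesis Hg : Rabs g < 1.

Definition T l t := (2 * INR l + 1) / 2 * g ^ l * legendre l t.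
Definition M l := (2 * INR l + 1) / 2 * Rabs g ^ l.
Definition V t := (1 - g ^ 2) / (2 * ((1 - 2 * g * t + g ^ 2) * sqrt (1 - 2 * g * t + g ^ 2))).

Lemma M_pos l : 0 <= M l.
Proof.
  unfold M. apply Rmult_le_pos; [|apply pow_le, Rabs_pos].
  pose proof (pos_INR l). unfold Rdiv. apply Rmult_le_pos; lra.
Qed.

Lemma exM : ex_series M.
Proof.
  apply (ex_series_le (K := R_AbsRing) (V := R_CompleteNormedModule)) with (fun l => INR (S l) * Rabs g ^ l).
  - intro n. change (norm (M n)) with (Rabs (M n)). rewrite Rabs_pos_eq by apply M_pos. unfold M. rewrite S_INR.
    assert (0 <= Rabs g ^ n) by (apply pow_le, Rabs_pos). pose proof (pos_INR n). nra.
  - apply ex_series_n_geom; auto.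
Qed.

Lemma T_bound l t : -1 <= t <= 1 -> Rabs (T l t) <= M l.
Proof.
  intros Ht. unfold T, M. rewrite !Rabs_mult, <- RPow_abs.
  rewrite (Rabs_pos_eq ((2 * INR l + 1) / 2)) by (pose proof (pos_INR l); unfold Rdiv; apply Rmult_le_pos; lra).
  pose proof (leg_bound l t Ht). pose proof (Rabs_pos (legendre l t)).
  assert (0 <= (2 * INR l + 1) / 2 * Rabs g ^ l) by apply M_pos.
  nra.
Qed.

Lemma serT t : -1 <= t <= 1 -> is_series (fun l => T l t) (V t).
Proof. intros Ht. unfold T, V. apply gf_weighted; auto. Qed.

Lemma tail t N : -1 <= t <= 1 ->
  Rabs (V t - sum_f_R0 (fun l => T l t) N) <= Series (fun k => M (S N + k)).
Proof.
  intros Ht. pose proof (serT t Ht) as HS.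
  assert (exT : ex_series (fun l => T l t)) by (eexists; exact HS).
  pose proof (Series_incr_n _ (S N) ltac:(lia) exT) as E. simpl pred in E.
  rewrite (is_series_unique _ _ HS) in E.
  replace (V t - sum_f_R0 (fun l => T l t) N) with (Series (fun k => T (S N + k) t)) by lra.
  assert (exMs : ex_series (fun k => M (S N + k))) by (apply (ex_series_incr_n M (S N)), exM).
  assert (exa : ex_series (fun k => Rabs (T (S N + k) t))).
  { apply (ex_series_le (K := R_AbsRing) (V := R_CompleteNormedModule)) with (fun k => M (S N + k)); auto.
    intro n. change (norm (Rabs (T (S N + n) t))) with (Rabs (Rabs (T (S N + n) t))). rewrite Rabs_Rabsolu. apply T_bound; auto. }
  eapply Rle_trans; [apply Series_Rabs; exact exa|].
  apply Series_le; auto. intro n. split; [apply Rabs_pos|apply T_bound; auto].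
Qed.

Lemma tau_lim : is_lim_seq (fun N => Series (fun k => M (S N + k))) 0.
Proof.
  assert (E : forall N, Series (fun k => M (S N + k)) = Series M - sum_f_R0 M N).
  { intro N. rewrite (Series_incr_n M (S N) ltac:(lia) exM). simpl pred. ring. }
  apply is_lim_seq_ext with (fun N => Series M - sum_f_R0 M N); [intros; rewrite E; reflexivity|].
  replace (Finite 0) with (Finite (Series M - Series M)) by (f_equal; ring).
  apply is_lim_seq_minus'; [apply is_lim_seq_const|].
  apply series_lim. apply Series_correct, exM.
Qed.

Lemma cc_bound mu th v : -1 <= cc mu th v <= 1.
Proof.
  pose proof (trig_Q1 mu th v) as Q.
  assert (cc mu th v * cc mu th v <= 1).
  { assert (0 <= ct mu th v * ct mu th v) by nra. assert (0 <= sin mu ^ 2 * sin v ^ 2) by (apply Rmult_le_pos; apply pow2_ge_0). lra. }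
  split; nra.
Qed.

Lemma cc_cont mu th v : continuous (cc mu th) v.
Proof. apply (ex_derive_continuous (V := R_NormedModule)). unfold cc. auto_derive; auto. Qed.

Lemma Tcc_cont mu th l v : continuous (fun v => T l (cc mu th v)) v.
Proof.
  unfold T. apply (continuous_scal_r (V := R_NormedModule) ((2 * INR l + 1) / 2 * g ^ l) (fun v => legendre l (cc mu th v))).
  apply (continuous_comp (cc mu th) (legendre l)); [apply cc_cont|apply leg_cont].
Qed.

Lemma sumT_cont mu th N v : continuous (fun v => sum_f_R0 (fun l => T l (cc mu th v)) N) v.
Proof.
  induction N; simpl.
  - apply Tcc_cont.
  - apply (continuous_plus (V := R_NormedModule) (fun v => sum_f_R0 (fun l => T l (cc mu th v)) N) (fun v => T (S N) (cc mu th v))); auto.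
    apply Tcc_cont.
Qed.

Lemma Vcc_cont mu th v : continuous (fun v => V (cc mu th v)) v.
Proof.
  apply (ex_derive_continuous (V := R_NormedModule)). unfold V.
  pose proof (cc_bound mu th v) as Hb. pose proof (w2_pos g (cc mu th v) Hg Hb) as Hw.
  assert (0 < sqrt (1 - 2 * g * cc mu th v + g ^ 2)) by (apply sqrt_lt_R0; lra).
  unfold cc in *. auto_derive.
  replace (1 + - (2 * g * (cos th * cos mu + sin th * sin mu * cos v)) + g * (g * 1)) with
    (1 - 2 * g * (cos th * cos mu + sin th * sin mu * cos v) + g ^ 2) by ring.
  repeat split; auto; try lra. apply Rgt_not_eq. apply Rmult_lt_0_compat; [lra|]. apply Rmult_lt_0_compat; lra.
Qed.

Lemma exR (f : R -> R) a b : (forall v, continuous f v) -> ex_RInt f a b.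
Proof. intros H. apply (ex_RInt_continuous (V := R_CompleteNormedModule)). intros; apply H. Qed.

Lemma series_avg th mu : 0 <= th <= PI ->
  is_series (H_term g (cos th) (cos mu)) (/ PI * RInt (fun v => V (cc mu th v)) 0 PI).
Proof.
  intros Hth. pose proof PI_RGT_0 as HPI.
  assert (Hterm : forall l, H_term g (cos th) (cos mu) l = / PI * RInt (fun v => T l (cc mu th v)) 0 PI).
  { intro l. unfold T.
    rewrite (RInt_ext _ (fun v => scal ((2 * INR l + 1) / 2 * g ^ l) (legendre l (cc mu th v)))).
    2: { intros. reflexivity. }
    rewrite (RInt_scal (V := R_CompleteNormedModule)).
    2: { apply exR. intro v. apply (continuous_comp (cc mu th) (legendre l)); [apply cc_cont|apply leg_cont]. }
    unfold cc. rewrite addition_thm by auto. unfold H_term.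
    change (scal ?a ?b) with (a * b). field. lra. }
  assert (Hsum : forall N, sum_f_R0 (H_term g (cos th) (cos mu)) N = / PI * RInt (fun v => sum_f_R0 (fun l => T l (cc mu th v)) N) 0 PI).
  { induction N.
    - simpl. apply Hterm.
    - simpl. rewrite IHN, Hterm.
      rewrite (RInt_ext (fun v => sum_f_R0 (fun l => T l (cc mu th v)) N + T (S N) (cc mu th v))
                (fun v => plus (sum_f_R0 (fun l => T l (cc mu th v)) N) (T (S N) (cc mu th v)))) by reflexivity.
      rewrite (RInt_plus (V := R_CompleteNormedModule)); [|apply exR, sumT_cont|apply exR, Tcc_cont].
      change (plus ?a ?b) with (a + b). ring. }
  apply lim_series.
  set (L := / PI * RInt (fun v => V (cc mu th v)) 0 PI).
  set (tau := fun N => Series (fun k => M (S N + k))).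
  assert (Hb : forall N, Rabs (sum_f_R0 (H_term g (cos th) (cos mu)) N - L) <= tau N).
  { intro N. rewrite Hsum. unfold L.
    rewrite <- Rmult_minus_distr_l.
    assert (E : RInt (fun v => sum_f_R0 (fun l => T l (cc mu th v)) N) 0 PI - RInt (fun v => V (cc mu th v)) 0 PI
      = RInt (fun v => sum_f_R0 (fun l => T l (cc mu th v)) N - V (cc mu th v)) 0 PI).
    { rewrite (RInt_ext (fun v => sum_f_R0 (fun l => T l (cc mu th v)) N - V (cc mu th v))
                (fun v => minus (sum_f_R0 (fun l => T l (cc mu th v)) N) (V (cc mu th v)))) by reflexivity.
      rewrite (RInt_minus (V := R_CompleteNormedModule)); [|apply exR, sumT_cont|apply exR, Vcc_cont].
      reflexivity. }
    rewrite E, Rabs_mult, Rabs_Rinv by lra. rewrite (Rabs_pos_eq PI) by lra.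
    assert (Hle : Rabs (RInt (fun v => sum_f_R0 (fun l => T l (cc mu th v)) N - V (cc mu th v)) 0 PI) <= (PI - 0) * tau N).
    { apply abs_RInt_le_const; [lra| |].
      - apply exR. intro v. apply (continuous_minus (V := R_NormedModule) (fun v => sum_f_R0 (fun l => T l (cc mu th v)) N) (fun v => V (cc mu th v))); [apply sumT_cont|apply Vcc_cont].
      - intros v _. rewrite Rabs_minus_sym. apply tail; auto. apply cc_bound. }
    apply Rmult_le_reg_l with PI; [lra|]. rewrite <- Rmult_assoc, Rinv_r by lra. lra. }
  apply is_lim_seq_le_le with (fun N => L - tau N) (fun N => L + tau N).
  - intro N. specialize (Hb N). apply Rabs_le_between in Hb. lra.
  - replace (Finite L) with (Finite (L - 0)) by (f_equal; ring).
    apply is_lim_seq_minus'; [apply is_lim_seq_const|apply tau_lim].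
  - replace (Finite L) with (Finite (L + 0)) by (f_equal; ring).
    apply is_lim_seq_plus'; [apply is_lim_seq_const|apply tau_lim].
Qed.

End Ser.

Lemma wpos g a : -1 < g < 1 -> 0 < 1 + g ^ 2 - 2 * g * cos a.
Proof.
  intros Hg. assert (Rabs g < 1) by (apply Rabs_def1; lra).
  pose proof (w2_pos g (cos a) H (COS_bound a)). lra.
Qed.

Lemma part2 g : -1 < g < 1 -> forall theta mu : R, 0 <= theta <= PI -> 0 <= mu <= PI ->
     let up := 1 + g ^ 2 - 2 * g * cos (theta + mu) in
     let um := 1 + g ^ 2 - 2 * g * cos (theta - mu) in
     is_series (H_term g (cos theta) (cos mu))
       ((1 - g ^ 2) / (PI * um * sqrt up) * E0 ((up - um) / up)).
Proof.
  intros Hg th mu Hth Hmu up um.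
  assert (Hg' : Rabs g < 1) by (apply Rabs_def1; lra).
  pose proof (series_avg g Hg' th mu Hth) as HS.
  pose proof PI_RGT_0.
  assert (Hup : 0 < up) by apply wpos, Hg. assert (Hum : 0 < um) by apply wpos, Hg.
  set (A := 1 + g ^ 2 - 2 * g * (cos th * cos mu)) in *.
  set (B := 2 * g * (sin th * sin mu)) in *.
  assert (EA : A - B = um) by (unfold um, A, B; rewrite cos_minus; ring).
  assert (EB : A + B = up) by (unfold up, A, B; rewrite cos_plus; ring).
  assert (Hell := ell_full A B ltac:(lra) ltac:(lra)).
  rewrite (RInt_ext _ (fun v => scal ((1 - g ^ 2) / 2) (1 / ((A - B * cos v) * sqrt (A - B * cos v))))) in HS.
  2: { intros v _. unfold V, cc. change (scal ?a ?b) with (a * b).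
       assert (E : 1 - 2 * g * (cos th * cos mu + sin th * sin mu * cos v) + g ^ 2 = A - B * cos v) by (unfold A, B; ring).
       rewrite E. assert (0 < A - B * cos v).
       { pose proof (cc_bound mu th v) as Hb. pose proof (w2_pos g _ Hg' Hb). unfold cc in *. lra. }
       assert (0 < sqrt (A - B * cos v)) by (apply sqrt_lt_R0; lra).
       match goal with |- ?a = ?b => change (@eq R a b) end. field. split; lra. }
  rewrite (RInt_scal (V := R_CompleteNormedModule)) in HS.
  2: { apply (ex_RInt_continuous (V := R_CompleteNormedModule)). intros v _.
       apply (ex_derive_continuous (V := R_NormedModule)).
       assert (0 < A - B * cos v).
       { pose proof (cc_bound mu th v) as Hb. pose proof (w2_pos g _ Hg' Hb). unfold cc in *.
         replace (A - B * cos v) with (1 - 2 * g * (cos th * cos mu + sin th * sin mu * cos v) + g ^ 2) by (unfold A, B; ring). lra. }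
       assert (0 < sqrt (A - B * cos v)) by (apply sqrt_lt_R0; lra).
       auto_derive. replace (A + - (B * cos v)) with (A - B * cos v) by ring.
       repeat split; auto; try lra. apply Rgt_not_eq, Rmult_lt_0_compat; auto. }
  rewrite Hell in HS. change (scal ?a ?b) with (a * b) in HS.
  eapply is_series_ext; [intro; reflexivity|].
  match goal with H : is_series _ ?v |- is_series _ ?w => replace w with v; [exact H|] end.
  rewrite EA, EB. replace ((up - um) / up) with (2 * B / (A + B)) by (rewrite <- EA, <- EB; field; lra).
  rewrite EB. assert (0 < sqrt up) by (apply sqrt_lt_R0; lra).
  field. repeat split; lra.
Qed.

Theorem mainTheorem1 :
  forall g : R, -1 < g < 1 ->
  (forall x y : R, -1 <= x <= 1 -> -1 <= y <= 1 ->
     let s := sqrt (1 - x ^ 2) * sqrt (1 - y ^ 2) in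
     let wp := 1 + g ^ 2 - 2 * g * (x * y - s) in
     let wm := 1 + g ^ 2 - 2 * g * (x * y + s) in
     0 < wp /\ 0 < wm /\
     is_series (H_term g x y)
       ((1 - g ^ 2) / (PI * wm * sqrt wp) * E0 (4 * g * s / wp))) /\
  (forall theta mu : R, 0 <= theta <= PI -> 0 <= mu <= PI ->
     let up := 1 + g ^ 2 - 2 * g * cos (theta + mu) in
     let um := 1 + g ^ 2 - 2 * g * cos (theta - mu) in
     is_series (H_term g (cos theta) (cos mu))
       ((1 - g ^ 2) / (PI * um * sqrt up) * E0 ((up - um) / up))).
Proof.
  intros g Hg. split; [|apply part2; auto].
  intros x y Hx Hy s wp wm.
  set (th := acos x). set (mu := acos y).
  assert (Cx : cos th = x) by (apply cos_acos; auto).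
  assert (Cy : cos mu = y) by (apply cos_acos; auto).
  assert (Sx : sin th = sqrt (1 - x ^ 2)) by (unfold th; rewrite sin_acos by auto; unfold Rsqr; f_equal; ring).
  assert (Sy : sin mu = sqrt (1 - y ^ 2)) by (unfold mu; rewrite sin_acos by auto; unfold Rsqr; f_equal; ring).
  assert (Ep : wp = 1 + g ^ 2 - 2 * g * cos (th + mu)) by (unfold wp, s; rewrite cos_plus, Cx, Cy, Sx, Sy; ring).
  assert (Em : wm = 1 + g ^ 2 - 2 * g * cos (th - mu)) by (unfold wm, s; rewrite cos_minus, Cx, Cy, Sx, Sy; ring).
  assert (Hp : 0 < wp) by (rewrite Ep; apply wpos; auto).
  assert (Hm : 0 < wm) by (rewrite Em; apply wpos; auto).
  split; [auto|split; [auto|]].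
  pose proof (part2 g Hg th mu (acos_bound x) (acos_bound y)) as H. simpl in H.
  rewrite Cx, Cy in H.
  replace (4 * g * s / wp) with ((wp - wm) / wp).
  - rewrite Ep, Em. exact H.
  - unfold wp, wm. field. fold wp. lra.
Qed.
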